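(* Let $P,Q\in\Gamma_n$ with $P\ne Q$, and $0<r\le R$ with $r\le p_i/q_i\le R$ for all $i$. Then $$r\le\frac{\chi^2(P\|Q)^{2/3}}{4\,h(P\|Q)^{2/3}}\le R.$$
   Context: $\Gamma_n=\{P=(p_1,\dots,p_n): p_i>0,\ \sum_i p_i=1\}$, $n\ge2$. $\chi^2(P\|Q)=\sum_i\frac{(p_i-q_i)^2}{q_i}$ and $h(P\|Q)=\frac12\sum_i(\sqrt{p_i}-\sqrt{q_i})^2$ (Hellinger discrimination). *)

(* Defs.v *)
From mathcomp Require Import all_boot all_order all_algebra.
From mathcomp Require Import all_classical all_reals all_analysis.
Set Implicit Arguments. Unset Strict Implicit. Unset Printing Implicit Defensive.
Import Order.TTheory GRing.Theory Num.Theory.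
Local Open Scope ring_scope.

Definition Gamma (R : realType) (n : nat) (P : 'I_n -> R) : Prop :=
  (forall i, 0 < P i) /\ \sum_(i < n) P i = 1.

Definition chi2 (R : realType) (n : nat) (P Q : 'I_n -> R) : R :=
  \sum_(i < n) (P i - Q i) ^+ 2 / Q i.

Definition hell (R : realType) (n : nat) (P Q : 'I_n -> R) : R :=
  2^-1 * \sum_(i < n) (Num.sqrt (P i) - Num.sqrt (Q i)) ^+ 2.

(* Main.v *)
Set Warnings "-all".
Require Import Defs.
From mathcomp Require Import all_boot all_order all_algebra.
From mathcomp Require Import all_classical all_reals all_analysis.
From mathcomp Require Import ring lra.
Import Order.TTheory GRing.Theory Num.Theory.
Local Open Scope ring_scope.

Lemma pow23 (R : realType) (z : R) : 0 <= z -> (z ^+ 3) `^ (2 / 3) = z ^+ 2.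
Proof.
move=> z0.
rewrite -powR_mulrn // -powRrM.
have -> : (3%:R * (2 / 3) : R) = 2%:R by field.
by rewrite powR_mulrn.
Qed.

Lemma term_bounds (R : realType) (p q a b : R) :
  0 < p -> 0 < q -> 0 < a -> a <= p / q <= b ->
  (Num.sqrt a + 1) ^+ 2 * (Num.sqrt p - Num.sqrt q) ^+ 2 <= (p - q) ^+ 2 / q
  <= (Num.sqrt b + 1) ^+ 2 * (Num.sqrt p - Num.sqrt q) ^+ 2.
Proof.
move=> p0 q0 a0 /andP[ha hb].
have b0 : 0 < b by apply: lt_le_trans a0 (le_trans ha hb).
rewrite ler_pdivlMr // in ha; rewrite ler_pdivrMr // in hb.
set x := Num.sqrt p; set y := Num.sqrt q; set s := Num.sqrt a; set S := Num.sqrt b.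
have x0 : 0 < x by rewrite sqrtr_gt0.
have y0 : 0 < y by rewrite sqrtr_gt0.
have s0 : 0 <= s by rewrite sqrtr_ge0.
have S0 : 0 <= S by rewrite sqrtr_ge0.
have hsy : s * y <= x by rewrite -sqrtrM ?ler_sqrt // ltW.
have hSy : x <= S * y by rewrite -sqrtrM ?ler_sqrt ?mulr_ge0 // ltW.
have pE : p = x ^+ 2 by rewrite sqr_sqrtr // ltW.
have qE : q = y ^+ 2 by rewrite sqr_sqrtr // ltW.
have -> : (p - q) ^+ 2 / q = (x - y) ^+ 2 * ((x + y) ^+ 2 / y ^+ 2).
  by rewrite pE qE; field; rewrite gt_eqF.
have y20 : 0 < y ^+ 2 by rewrite exprn_gt0.
have d0 : 0 <= (x - y) ^+ 2 by rewrite sqr_ge0.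
apply/andP; split; rewrite [_ * (x - y) ^+ 2]mulrC; apply: ler_wpM2l => //.
- rewrite ler_pdivlMr //.
  have h1 : 0 <= (s + 1) * y by rewrite mulr_ge0 // ?addr_ge0 // ltW.
  have h2 : (s + 1) * y <= x + y by lra.
  nra.
- rewrite ler_pdivrMr //.
  have h2 : x + y <= (S + 1) * y by lra.
  nra.
Qed.

Theorem mainTheorem14 (R : realType) (n : nat) (P Q : 'I_n -> R) (r Rr : R) :
  (2 <= n)%N -> Gamma P -> Gamma Q -> P <> Q ->
  0 < r -> r <= Rr ->
  (forall i, r <= P i / Q i <= Rr) ->
  r <= (chi2 P Q `^ (2 / 3)) / (4 * hell P Q `^ (2 / 3)) <= Rr.
Proof.
move=> n2 [P0 P1] [Q0 Q1] PQ r0 rR hPQ.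
set s := Num.sqrt r; set S := Num.sqrt Rr.
have s0 : 0 <= s by rewrite sqrtr_ge0.
have S0 : 0 <= S by rewrite sqrtr_ge0.
have R0 : 0 < Rr by apply: lt_le_trans rR.
have r1 : r <= 1.
  have : \sum_i r * Q i <= \sum_i P i.
    by apply: ler_sum => i _; have /andP[h _] := hPQ i; rewrite -ler_pdivlMr // mulrC.
  by rewrite -mulr_sumr Q1 P1 mulr1.
have R1 : 1 <= Rr.
  have : \sum_i P i <= \sum_i Rr * Q i.
    by apply: ler_sum => i _; have /andP[_ h] := hPQ i; rewrite -ler_pdivrMr // mulrC.
  by rewrite -mulr_sumr Q1 P1 mulr1.
have s1 : s <= 1 by rewrite /s -sqrtr1 ler_sqrt.
have S1 : 1 <= S by rewrite /S -[X in X <= _]sqrtr1 ler_sqrt // ltW.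
set D := \sum_(i < n) (Num.sqrt (P i) - Num.sqrt (Q i)) ^+ 2.
have hE : hell P Q = 2^-1 * D by [].
have D0 : 0 < D.
  have [i Hi] : exists i, P i != Q i.
    apply: contrapT => H; apply: PQ; apply: funext => i.
    apply/eqP; apply: contrapT => Hn; apply: H; exists i; exact/negP.
  rewrite /D (bigD1 i) //=.
  have hs : 0 <= \sum_(j < n | j != i) (Num.sqrt (P j) - Num.sqrt (Q j)) ^+ 2.
    by apply: sumr_ge0 => j _; rewrite sqr_ge0.
  have ht : 0 < (Num.sqrt (P i) - Num.sqrt (Q i)) ^+ 2.
    by rewrite exprn_even_gt0 //= subr_eq0 eqr_sqrt ?ltW.
  lra.
have chiL : (s + 1) ^+ 2 * D <= chi2 P Q.
  rewrite /D /chi2 mulr_sumr; apply: ler_sum => i _.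
  by have /andP[h _] := @term_bounds R (P i) (Q i) r Rr (P0 i) (Q0 i) r0 (hPQ i).
have chiU : chi2 P Q <= (S + 1) ^+ 2 * D.
  rewrite /D /chi2 mulr_sumr; apply: ler_sum => i _.
  by have /andP[_ h] := @term_bounds R (P i) (Q i) r Rr (P0 i) (Q0 i) r0 (hPQ i).
have h0 : 0 < hell P Q by rewrite hE mulr_gt0 // invr_gt0.
have hp0 : 0 < hell P Q `^ (2 / 3) by apply: powR_gt0.
have c0 : 0 <= chi2 P Q.
  by apply: le_trans chiL; rewrite mulr_ge0 ?sqr_ge0 // ltW.
have rE : r = s ^+ 2 by rewrite sqr_sqrtr // ltW.
have RE : Rr = S ^+ 2 by rewrite sqr_sqrtr // ltW.
apply/andP; split.
- rewrite ler_pdivlMr ?mulr_gt0 //.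
  have -> : r * (4 * hell P Q `^ (2 / 3)) = ((2 * s) ^+ 3 * hell P Q) `^ (2 / 3).
    rewrite [RHS]powRM; last 2 first.
      by rewrite exprn_ge0 // mulr_ge0.
      by rewrite ltW.
    rewrite (@pow23 R (2 * s)) ?mulr_ge0 // rE.
    by rewrite exprMn; ring.
  apply: ge0_ler_powR.
  + by rewrite divr_ge0.
  + by rewrite nnegrE mulr_ge0 ?exprn_ge0 ?mulr_ge0 // ltW.
  + by rewrite nnegrE.
  apply: (le_trans _ chiL); rewrite hE.
  have : 4 * s ^+ 3 <= (s + 1) ^+ 2 by nra.
  move=> H; have := ler_wpM2r (ltW D0) H; nra.
- rewrite ler_pdivrMr ?mulr_gt0 //.
  have -> : Rr * (4 * hell P Q `^ (2 / 3)) = ((2 * S) ^+ 3 * hell P Q) `^ (2 / 3).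
    rewrite [RHS]powRM; last 2 first.
      by rewrite exprn_ge0 // mulr_ge0.
      by rewrite ltW.
    rewrite (@pow23 R (2 * S)) ?mulr_ge0 // RE.
    by rewrite exprMn; ring.
  apply: ge0_ler_powR.
  + by rewrite divr_ge0.
  + by rewrite nnegrE.
  + by rewrite nnegrE mulr_ge0 ?exprn_ge0 ?mulr_ge0 // ltW.
  apply: (le_trans chiU); rewrite hE.
  have : (S + 1) ^+ 2 <= 4 * S ^+ 3 by nra.
  move=> H; have := ler_wpM2r (ltW D0) H; nra.
Qed.
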